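(* For all integers $n\ge0$, $$r_{2n}(s,q)=\sum_{k=0}^n(-q;q)_k\,q^{\binom{k}{2}}s^k\begin{bmatrix} n\\ k\end{bmatrix}_{q^2}r_{n-k}(s^2,q^2),$$ $$r_{2n+1}(s,q)=(1+s)\sum_{k=0}^n(-q;q)_k\,q^{\binom{k+1}{2}}s^k\begin{bmatrix} n\\ k\end{bmatrix}_{q^2}r_{n-k}(s^2,q^2).$$
   Context: $q$ is an indeterminate. $(x;q)_n=\prod_{j=0}^{n-1}(1-q^jx)$. The Gaussian binomial coefficient is $\begin{bmatrix} n\\ j\end{bmatrix}_q=\frac{(q;q)_n}{(q;q)_j(q;q)_{n-j}}$ for $0\le j\le n$ and $0$ otherwise. The Rogers–Szegö polynomials are $r_n(s,q)=\sum_{j=0}^n\begin{bmatrix} n\\ j\end{bmatrix}_q s^j$. *)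

(* Defs.v *)
From HB Require Import structures.
From mathcomp Require Import all_boot all_order all_algebra.
Set Implicit Arguments. Unset Strict Implicit. Unset Printing Implicit Defensive.
Import Order.TTheory GRing.Theory Num.Theory.
Local Open Scope ring_scope.

Definition K : fieldType := {fraction {poly rat}}.
Definition qK : K := tofrac ('X : {poly rat}).

Definition qpoch (x b : K) (n : nat) : K := \prod_(j < n) (1 - b ^+ j * x).

Definition gauss (b : K) (n j : nat) : K :=
  if (j <= n)%N then qpoch b b n / (qpoch b b j * qpoch b b (n - j)) else 0.

Definition RS (s b : K) (n : nat) : K := \sum_(j < n.+1) gauss b n j * s ^+ j.

(* Main.v *)
Require Import Defs.
From HB Require Import structures.
From mathcomp Require Import all_boot all_order all_algebra.
From mathcomp Require Import ring.
Import GRing.Theory.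
Local Open Scope ring_scope.
Lemma fl1 (F : fieldType) (Q A B x y : F) : A != 0 -> B != 0 -> 1 - x != 0 -> 1 - y != 0 ->
  Q*(1 - x*y)/(A*(1-x)*(B*(1-y))) = Q/(A*(B*(1-y))) + x*(Q/(A*(1-x)*B)).
Proof. move=> a b c d; field; by rewrite a b c d. Qed.
Lemma fl2 (F : fieldType) (Q A B x y : F) : A != 0 -> B != 0 -> 1 - x != 0 -> 1 - y != 0 ->
  Q*(1 - x*y)/(A*(1-x)*(B*(1-y))) = y*(Q/(A*(B*(1-y)))) + Q/(A*(1-x)*B).
Proof. move=> a b c d; field; by rewrite a b c d. Qed.
Lemma helper3 (R : comRingType) (a c x y : R) : a * x + y = x + c * y -> (1 - c) * y = (1 - a) * x.
Proof.
move=> E; apply/eqP; rewrite -subr_eq0; apply/eqP.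
transitivity (a * x + y - (x + c * y)); first ring.
by rewrite E subrr.
Qed.

Section Gauss.
Variable b : K.
Hypothesis hb : forall m, (0 < m)%N -> b ^+ m != 1.

Lemma qpochS n : qpoch b b n.+1 = qpoch b b n * (1 - b ^+ n.+1).
Proof. by rewrite /qpoch big_ord_recr -exprSr. Qed.

Lemma qpoch0 : qpoch b b 0 = 1.
Proof. by rewrite /qpoch big_ord0. Qed.

Lemma subX_neq0 m : (0 < m)%N -> 1 - b ^+ m != 0.
Proof. by move=> hm; rewrite subr_eq0 eq_sym hb. Qed.

Lemma qpoch_neq0 n : qpoch b b n != 0.
Proof.
elim: n => [|n IH]; first by rewrite qpoch0; exact: oner_neq0.
rewrite qpochS; apply: mulf_neq0; first exact: IH.
exact: subX_neq0.
Qed.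

Lemma gauss0 n : gauss b n 0 = 1.
Proof. by rewrite /gauss leq0n subn0 qpoch0 mul1r divff //; exact: qpoch_neq0. Qed.

Lemma gauss_gt n k : (n < k)%N -> gauss b n k = 0.
Proof. by rewrite /gauss ltnNge => /negbTE ->. Qed.

Lemma gaussnn n : gauss b n n = 1.
Proof. by rewrite /gauss leqnn subnn qpoch0 mulr1 divff //; exact: qpoch_neq0. Qed.

Lemma gauss_split n k : (k < n)%N -> exists p, n = (k + p.+1)%N.
Proof. by move=> hk; exists (n - k.+1)%N; rewrite -addSnnS subnKC. Qed.

Lemma gauss_S1 n k :
  gauss b n.+1 k.+1 = gauss b n k + b ^+ k.+1 * gauss b n k.+1.
Proof.
case: (ltngtP k n) => hk; last first.
- by subst k; rewrite !gaussnn gauss_gt // mulr0 addr0.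
- by rewrite !gauss_gt // ?mulr0 ?addr0 // ltnW.
have [p ->] := @gauss_split n k hk.
rewrite /gauss.
have e1 : ((k + p.+1).+1 - k.+1 = p.+1)%N by rewrite subSS addKn.
have e2 : (k + p.+1 - k = p.+1)%N by rewrite addKn.
have e3 : (k + p.+1 - k.+1 = p)%N by rewrite addnS subSS addKn.
have c1 : (k < (k + p.+1).+1)%N by rewrite ltnS leq_addr.
have c2 : (k <= k + p.+1)%N by rewrite leq_addr.
have c3 : (k < k + p.+1)%N by rewrite addnS ltnS leq_addr.
rewrite e1 e2 e3 c1 c2 c3.
have eN : ((k + p.+1).+1 = k.+1 + p.+1)%N by rewrite addSn.
set N := (k + p.+1)%N.
rewrite [qpoch b b N.+1]qpochS [qpoch b b k.+1]qpochS [qpoch b b p.+1]qpochS eN exprD.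
apply: fl1; [exact: qpoch_neq0 | exact: qpoch_neq0 | exact: subX_neq0 | exact: subX_neq0].
Qed.

Lemma gauss_S2 n k :
  gauss b n.+1 k.+1 = b ^+ (n - k) * gauss b n k + gauss b n k.+1.
Proof.
case: (ltngtP k n) => hk; last first.
- by subst k; rewrite !gaussnn gauss_gt // subnn expr0 mulr1 addr0.
- by rewrite !gauss_gt // ?mulr0 ?addr0 // ltnW.
have [p ->] := @gauss_split n k hk.
rewrite /gauss.
have e1 : ((k + p.+1).+1 - k.+1 = p.+1)%N by rewrite subSS addKn.
have e2 : (k + p.+1 - k = p.+1)%N by rewrite addKn.
have e3 : (k + p.+1 - k.+1 = p)%N by rewrite addnS subSS addKn.
have c1 : (k < (k + p.+1).+1)%N by rewrite ltnS leq_addr.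
have c2 : (k <= k + p.+1)%N by rewrite leq_addr.
have c3 : (k < k + p.+1)%N by rewrite addnS ltnS leq_addr.
rewrite e1 e2 e3 c1 c2 c3.
have eN : ((k + p.+1).+1 = k.+1 + p.+1)%N by rewrite addSn.
set N := (k + p.+1)%N.
rewrite [qpoch b b N.+1]qpochS [qpoch b b k.+1]qpochS [qpoch b b p.+1]qpochS eN exprD.
apply: fl2; [exact: qpoch_neq0 | exact: qpoch_neq0 | exact: subX_neq0 | exact: subX_neq0].
Qed.

Lemma RSE t m : RS t b m = \sum_(0 <= j < m.+1) gauss b m j * t ^+ j.
Proof. by rewrite /RS big_mkord. Qed.

Lemma RS_P1 t m : RS t b m.+1 = RS (b * t) b m + t * RS t b m.
Proof.
rewrite !RSE big_nat_recl // gauss0 expr0 mulr1.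
rewrite (eq_bigr (fun j => gauss b m j * t ^+ j.+1 + b ^+ j.+1 * gauss b m j.+1 * t ^+ j.+1)); last first.
  by move=> j _; rewrite gauss_S1 mulrDl.
rewrite big_split /= addrCA addrC; congr (_ + _); last first.
  by rewrite mulr_sumr; apply: eq_bigr => j _; rewrite exprS mulrCA.
rewrite [in RHS]big_nat_recl // gauss0 !expr0 mulr1 [in LHS]big_nat_recr //= gauss_gt // mulr0 mul0r addr0.
by congr (1 + _); apply: eq_bigr => j _; rewrite exprMn mulrCA mulrA.
Qed.

Lemma RS_P2 v m : RS (b * v) b m.+1 = RS (b * v) b m + b * v * b ^+ m * RS v b m.
Proof.
rewrite !RSE big_nat_recl // gauss0 expr0 mulr1.
rewrite (eq_bigr (fun j => b ^+ (m - j) * gauss b m j * (b * v) ^+ j.+1 + gauss b m j.+1 * (b * v) ^+ j.+1)); last first.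
  by move=> j _; rewrite gauss_S2 mulrDl.
rewrite big_split /= addrCA addrC; congr (_ + _).
  rewrite [in RHS]big_nat_recl // gauss0 !expr0 mulr1 [in LHS]big_nat_recr //= gauss_gt // mul0r addr0.
  by congr (1 + _).
rewrite mulr_sumr; apply: eq_big_nat => j /andP [_ hj].
rewrite ltnS in hj.
have -> : b ^+ m = b ^+ (m - j) * b ^+ j by rewrite -exprD subnK.
rewrite exprS exprMn.
ring.
Qed.

Lemma RS0 x : RS x b 0 = 1.
Proof. by rewrite /RS big_ord1 gaussnn expr0 mulr1. Qed.

Lemma RS_1 v m : RS (b * v) b m - b ^+ m * RS v b m = (1 - b ^+ m) * RS (b * v) b m.-1.
Proof.
case: m => [|m]; first by rewrite !RS0 expr0 mulr1 !subrr mul0r.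
rewrite RS_P2 RS_P1 /= exprS; ring.
Qed.

Lemma RS_2 v m : RS (b * v) b m - RS (b * (b * v)) b m = b * v * (RS (b * v) b m - b ^+ m * RS v b m).
Proof.
have E : RS (b * (b * v)) b m = RS (b * v) b m + b * v * b ^+ m * RS v b m - b * v * RS (b * v) b m.
  by rewrite -RS_P2 RS_P1 addrK.
rewrite E; ring.
Qed.
Lemma G3 n k : (1 - b ^+ k.+1) * gauss b n k.+1 = (1 - b ^+ (n - k)) * gauss b n k.
Proof. by apply: helper3; rewrite -gauss_S2 gauss_S1. Qed.
End Gauss.

Lemma qK_neq0 : qK != 0.
Proof. by rewrite /qK tofrac_eq0 polyX_eq0. Qed.

Lemma qKX_neq1 m : (0 < m)%N -> qK ^+ m != 1.
Proof.
move=> hm; rewrite /qK -tofracXn -tofrac1 tofrac_eq.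
apply/eqP => H; have := congr1 (fun p : {poly rat} => size p) H; rewrite /= size_polyXn size_poly1.
by move=> -[] E; rewrite E in hm.
Qed.

Local Notation bb := (qK ^+ 2).

Lemma hbb m : (0 < m)%N -> bb ^+ m != 1.
Proof. by move=> hm; rewrite -exprM; apply: qKX_neq1; rewrite muln_gt0 hm. Qed.

Lemma hq m : (0 < m)%N -> qK ^+ m != 1.
Proof. exact: qKX_neq1. Qed.



Definition F n u t := \sum_(k < n.+1) qpoch (- qK) qK k * qK ^+ 'C(k, 2) * u ^+ k
                    * gauss bb n k * RS t bb (n - k).
Local Notation a k := (qpoch (- qK) qK k * qK ^+ 'C(k, 2)).

Lemma FE n u t : F n u t = \sum_(0 <= k < n.+1) a k * u ^+ k * gauss bb n k * RS t bb (n - k).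
Proof. by rewrite /F big_mkord. Qed.

Lemma aS k : a k.+1 = a k * ((1 + qK ^+ k.+1) * qK ^+ k).
Proof.
rewrite /qpoch big_ord_recr /= binS bin1 exprD mulrN opprK -exprSr.
ring.
Qed.

Lemma bbX k : bb ^+ k = qK ^+ k * qK ^+ k.
Proof. by rewrite exprAC expr2. Qed.

Lemma R1u n v w : F n (qK * v) (bb * w) - F n (qK * (qK * v)) (bb * w)
  = qK * v * F n (qK * (qK * v)) (bb * w) - qK * v * bb ^+ n * F n v w.
Proof.
rewrite !FE -sumrB !mulr_sumr -sumrB.
rewrite [in RHS](@eq_big_nat _ _ _ 0 n.+1 _ (fun k => qK * v * (a k * (qK ^+ k * (qK ^+ k * v ^+ k)) * gauss bb n k) * ((1 - bb ^+ (n - k)) * RS (bb * w) bb (n - k).-1))); last first.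
  move=> k /andP [_ hk]; rewrite ltnS in hk.
  rewrite -RS_1; last exact: hbb.
  have eb : bb ^+ n = bb ^+ (n - k) * (qK ^+ k * qK ^+ k) by rewrite -bbX -exprD subnK.
  rewrite eb !exprMn; ring.
rewrite [in RHS]big_nat_recr //= subnn expr0 subrr mul0r mulr0 addr0.
rewrite [in LHS]big_nat_recl // !expr0 subrr add0r.
apply: eq_big_nat => k /andP [_ hk].
rewrite subnS aS.
transitivity ((a k * qK ^+ k * (qK * v * (qK ^+ k * v ^+ k)) * RS (bb * w) bb (n - k).-1) * ((1 - bb ^+ k.+1) * gauss bb n k.+1)).
  rewrite bbX !exprMn !exprS; ring.
rewrite G3; last exact: hbb.
ring.
Qed.

Lemma R2u n v w : F n (bb * v) (bb * w) - F n (bb * v) (bb * (bb * w))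
  = bb * w * F n (bb * v) (bb * w) - bb * w * bb ^+ n * F n v w.
Proof.
rewrite !FE -sumrB !mulr_sumr -sumrB.
apply: eq_big_nat => k /andP [_ hk]; rewrite ltnS in hk.
transitivity (a k * (bb * v) ^+ k * gauss bb n k * (RS (bb * w) bb (n - k) - RS (bb * (bb * w)) bb (n - k))).
  ring.
rewrite RS_2; last exact: hbb.
have eb : bb ^+ n = bb ^+ (n - k) * bb ^+ k by rewrite -exprD subnK.
rewrite eb exprMn; ring.
Qed.

Lemma Fstep n v w :
  F n.+1 (bb * (qK * v)) (bb * w) =
  (1 + qK * (bb * (qK * v)) * bb ^+ n) * F n (bb * (qK * v)) (bb * w)
  + bb * w * bb ^+ n * F n (qK * v) w + bb * (qK * v) * bb ^+ n * F n (bb * v) (bb * w).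
Proof.
set u := bb * (qK * v).
rewrite !FE [in LHS]big_nat_recl //.
rewrite (eq_bigr (fun k => a k.+1 * u ^+ k.+1 * (bb ^+ (n - k) * gauss bb n k) * RS (bb * w) bb (n - k)
   + a k.+1 * u ^+ k.+1 * gauss bb n k.+1 * RS (bb * w) bb (n - k))); last first.
  by move=> k _; rewrite gauss_S2; [rewrite subSS; ring | exact: hbb].
rewrite big_split /=.
set S1 := \sum_(0 <= k < n.+1) a k * u ^+ k * gauss bb n k * RS (bb * w) bb (n - k).
set S2 := \sum_(0 <= k < n.+1) a k * (qK * v) ^+ k * gauss bb n k * RS w bb (n - k).
set S3 := \sum_(0 <= k < n.+1) a k * (bb * v) ^+ k * gauss bb n k * RS (bb * w) bb (n - k).
set SB := \sum_(0 <= k < n.+1) a k.+1 * u ^+ k.+1 * (bb ^+ (n - k) * gauss bb n k) * RS (bb * w) bb (n - k).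
set SA := \sum_(0 <= k < n.+1) a k.+1 * u ^+ k.+1 * gauss bb n k.+1 * RS (bb * w) bb (n - k).
have hB : qK * u * bb ^+ n * S1 + u * bb ^+ n * S3 = SB.
  rewrite /S1 /S3 /SB !mulr_sumr -big_split /=.
  apply: eq_big_nat => k /andP [_ hk]; rewrite ltnS in hk.
  have eb : bb ^+ n = bb ^+ (n - k) * bb ^+ k by rewrite -exprD subnK.
  rewrite aS /u eb; have bk := bbX k; move: (qK ^+ 2) bk => B bk.
  rewrite !exprS !exprMn bk; ring.
have hA : S1 + bb * w * bb ^+ n * S2 =
    a 0 * u ^+ 0 * gauss bb n.+1 0 * RS (bb * w) bb (n.+1 - 0) + SA.
  rewrite /S1 /S2 /SA mulr_sumr -big_split /=.
  rewrite (@eq_big_nat _ _ _ 0 n.+1 _ (fun k => a k * u ^+ k * gauss bb n k * RS (bb * w) bb (n - k).+1)); last first.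
    move=> k /andP [_ hk]; rewrite ltnS in hk.
    have eb : bb ^+ n = bb ^+ (n - k) * bb ^+ k by rewrite -exprD subnK.
    rewrite RS_P2; last exact: hbb.
    rewrite /u eb !exprMn; ring.
  rewrite [in LHS]big_nat_recl // [in RHS]big_nat_recr //= (@gauss_gt bb n n.+1 (ltnSn n)).
  rewrite mulr0 mul0r addr0 !gauss0; try exact: hbb.
  congr (_ + _); first by rewrite subn0.
  apply: eq_big_nat => k /andP [_ hk].
  by rewrite subnSK.
transitivity (S1 + bb * w * bb ^+ n * S2 + (qK * u * bb ^+ n * S1 + u * bb ^+ n * S3)); last first.
  ring.
rewrite hA hB; ring.
Qed.

Lemma Fc n u u' t t' : u = u' -> t = t' -> F n u t = F n u' t'.
Proof. by move=> -> ->. Qed.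

Lemma eq_tr (x y x' y' : K) : x' = y' -> x - y = x' - y' -> x = y.
Proof. by move=> h e; apply/eqP; rewrite -subr_eq0 e h subrr. Qed.

Arguments eq_tr {x y x' y'}.

Lemma even_step n (IH : forall s, RS s qK (2 * n) = F n s (s ^+ 2)) y :
  RS (qK ^+ 3 * y) qK (2 * n.+1) = F n.+1 (qK ^+ 3 * y) ((qK ^+ 3 * y) ^+ 2).
Proof.
set A := F n (qK * y) (qK ^+ 2 * y ^+ 2).
set B := F n (qK ^+ 2 * y) (qK ^+ 4 * y ^+ 2).
set C := F n (qK ^+ 3 * y) (qK ^+ 6 * y ^+ 2).
set G := F n (qK ^+ 3 * y) (qK ^+ 4 * y ^+ 2).
set H0 := F n (qK ^+ 2 * y) (qK ^+ 6 * y ^+ 2).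
set H1 := F n (qK * y) (qK ^+ 4 * y ^+ 2).
set Kk := F n y (qK ^+ 2 * y ^+ 2).
set c := bb ^+ n.
have E1 : B - G = qK ^+ 2 * y * G - qK ^+ 2 * y * c * A.
  have H := R1u n (qK * y) (qK ^+ 2 * y ^+ 2).
  rewrite (@Fc n (qK * (qK * y)) (qK ^+ 2 * y) _ (qK ^+ 4 * y ^+ 2)) in H; try ring.
  rewrite (@Fc n (qK * (qK * (qK * y))) (qK ^+ 3 * y) _ (qK ^+ 4 * y ^+ 2)) in H; try ring.
  apply: (eq_tr H); rewrite /A /B /C /G /H0 /H1 /Kk /c; ring.
have E2 : G - C = qK ^+ 4 * y ^+ 2 * G - qK ^+ 4 * y ^+ 2 * c * A.
  have H := R2u n (qK * y) (qK ^+ 2 * y ^+ 2).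
  rewrite (@Fc n (bb * (qK * y)) (qK ^+ 3 * y) (bb * (qK ^+ 2 * y ^+ 2)) (qK ^+ 4 * y ^+ 2)) in H; try ring.
  rewrite (@Fc n (bb * (qK * y)) (qK ^+ 3 * y) _ (qK ^+ 6 * y ^+ 2)) in H; try ring.
  apply: (eq_tr H); rewrite /A /B /C /G /H0 /H1 /Kk /c; ring.
have E3 : H1 - B = qK * y * B - qK * y * c * Kk.
  have H := R1u n y (qK ^+ 2 * y ^+ 2).
  rewrite (@Fc n (qK * y) (qK * y) _ (qK ^+ 4 * y ^+ 2)) in H; try ring.
  rewrite (@Fc n (qK * (qK * y)) (qK ^+ 2 * y) _ (qK ^+ 4 * y ^+ 2)) in H; try ring.
  apply: (eq_tr H); rewrite /A /B /C /G /H0 /H1 /Kk /c; ring.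
have E4 : B - H0 = qK ^+ 4 * y ^+ 2 * B - qK ^+ 4 * y ^+ 2 * c * Kk.
  have H := R2u n y (qK ^+ 2 * y ^+ 2).
  rewrite (@Fc n (bb * y) (qK ^+ 2 * y) (bb * (qK ^+ 2 * y ^+ 2)) (qK ^+ 4 * y ^+ 2)) in H; try ring.
  rewrite (@Fc n (bb * y) (qK ^+ 2 * y) (bb * (bb * (qK ^+ 2 * y ^+ 2))) (qK ^+ 6 * y ^+ 2)) in H; try ring.
  apply: (eq_tr H); rewrite /A /B /C /G /H0 /H1 /Kk /c; ring.
have hF : F n.+1 (qK ^+ 3 * y) ((qK ^+ 3 * y) ^+ 2) =
    (1 + qK * (bb * (qK * y)) * c) * C + bb * (qK ^+ 4 * y ^+ 2) * c * H1 + bb * (qK * y) * c * H0.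
  rewrite (@Fc n.+1 _ (bb * (qK * y)) _ (bb * (qK ^+ 4 * y ^+ 2))); try ring.
  rewrite Fstep.
  rewrite (@Fc n (bb * (qK * y)) (qK ^+ 3 * y) (bb * (qK ^+ 4 * y ^+ 2)) (qK ^+ 6 * y ^+ 2)); try ring.
  rewrite (@Fc n (bb * y) (qK ^+ 2 * y) (bb * (qK ^+ 4 * y ^+ 2)) (qK ^+ 6 * y ^+ 2)); try ring.
  by [].
have hR : RS (qK ^+ 3 * y) qK (2 * n.+1) =
    C + qK * (qK * (qK * y)) * c * B + qK * (qK * (qK * y)) * (qK * c) * (B + qK * (qK * y) * c * A).
  rewrite (_ : (2 * n.+1 = (2 * n).+2)%N); last by rewrite mulnS add2n.
  rewrite (_ : qK ^+ 3 * y = qK * (qK * (qK * y))); last ring.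
  rewrite !(RS_P2 qK hq) !IH.
  rewrite (@Fc n (qK * (qK * (qK * y))) (qK ^+ 3 * y) _ (qK ^+ 6 * y ^+ 2)); try ring.
  rewrite (@Fc n (qK * (qK * y)) (qK ^+ 2 * y) _ (qK ^+ 4 * y ^+ 2)); try ring.
  rewrite (@Fc n (qK * y) (qK * y) _ (qK ^+ 2 * y ^+ 2)); try ring.
  rewrite [qK ^+ (2 * n).+1]exprS exprM.
  rewrite /A /B /C /c; ring.
rewrite hR hF; apply/eqP; rewrite -subr_eq0; apply/eqP.
transitivity (-(qK ^+ 3 * y * c) * (qK ^+ 3 * y * ((H1 - B) - (qK * y * B - qK * y * c * Kk))
   - ((B - H0) - (qK ^+ 4 * y ^+ 2 * B - qK ^+ 4 * y ^+ 2 * c * Kk))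
   - qK * ((1 - qK ^+ 2 * y) * ((B - G) - (bb * y * G - bb * y * c * A))
          + ((G - C) - (qK ^+ 4 * y ^+ 2 * G - qK ^+ 4 * y ^+ 2 * c * A))))).
  rewrite /A /B /C /G /H0 /H1 /Kk /c; ring.
rewrite E1 E2 E3 E4 !subrr; ring.
Qed.

Lemma even_all n s : RS s qK (2 * n) = F n s (s ^+ 2).
Proof.
elim: n s => [|n IH] s.
  rewrite muln0 (RS0 qK hq) /F big_ord1 (gaussnn bb hbb) (RS0 bb hbb) /qpoch big_ord0 bin0n !expr0.
  by rewrite !mul1r.
have q3 : qK ^+ 3 != 0 by apply: expf_neq0; exact: qK_neq0.
have := @even_step n IH (s / qK ^+ 3).
by rewrite mulrC divfK.
Qed.

Lemma odd_all n s : RS s qK (2 * n).+1 = (1 + s) * F n (qK * s) (s ^+ 2).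
Proof.
have q1 := qK_neq0.
have -> : s = qK * (s / qK) by rewrite mulrC divfK.
set y := s / qK.
rewrite (RS_P2 qK hq) !even_all.
have H := R1u n y (y ^+ 2).
rewrite (@Fc n (qK * (qK * y)) (qK * (qK * y)) ((qK * y) ^+ 2) (bb * y ^+ 2)); last ring; last by [].
rewrite (@Fc n (qK * y) (qK * y) ((qK * y) ^+ 2) (bb * y ^+ 2)); last ring; last by [].
rewrite exprM.
apply: (eq_tr H); ring.
Qed.

Theorem corollary1p1 (n : nat) (s : K) :
  RS s qK (2 * n) =
    \sum_(k < n.+1) qpoch (- qK) qK k * qK ^+ 'C(k, 2) * s ^+ k
                    * gauss (qK ^+ 2) n k * RS (s ^+ 2) (qK ^+ 2) (n - k)
  /\
  RS s qK (2 * n).+1 =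
    (1 + s) * \sum_(k < n.+1) qpoch (- qK) qK k * qK ^+ 'C(k.+1, 2) * s ^+ k
                    * gauss (qK ^+ 2) n k * RS (s ^+ 2) (qK ^+ 2) (n - k).
Proof.
split; first exact: even_all.
rewrite odd_all /F; congr (_ * _); apply: eq_bigr => k _.
rewrite binS bin1 exprD exprMn; ring.
Qed.
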